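(* Let $\psi\in\Psi$ satisfy $\lim_{t\to\infty}\frac{\psi(t\psi(t))}{\psi(t)}=1$. Let $x\in M_\psi$ and $c>\|x\|_{M_\psi}$. Then $n_x(1/t)\le ct\psi(t)$ for all sufficiently large $t$.
   Context: $\Psi$ is the class of concave increasing functions $\psi$ on $[0,\infty)$ with $\psi(\infty)=\infty$, $\psi(t)=O(t)$ as $t\to0$, $\psi(t)=o(t)$ as $t\to\infty$. For bounded measurable $x$ on $(0,\infty)$, $n_x(\lambda)=m(\{s:|x(s)|>\lambda\})$ and $x^*$ is the nonincreasing right-continuous rearrangement of $|x|$. $M_\psi$ is the space of bounded measurable $x$ with $\|x\|_{M_\psi}=\sup_{t>0}\frac1{\psi(t)}\int_0^tx^*(s)ds<\infty$. *)

(* Defs.v *)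
From HB Require Import structures.
From mathcomp Require Import all_boot all_order all_algebra.
From mathcomp Require Import all_classical all_reals all_analysis.
Set Implicit Arguments. Unset Strict Implicit. Unset Printing Implicit Defensive.
Import Order.TTheory GRing.Theory Num.Theory.
Import numFieldNormedType.Exports.
Local Open Scope classical_set_scope.
Local Open Scope ring_scope.

Section Defs.
Variable R : realType.

Definition in_Psi (psi : R -> R) : Prop :=
  [/\ (forall a b l : R, 0 <= a -> 0 <= b -> 0 <= l <= 1 ->
         (1 - l) * psi a + l * psi b <= psi ((1 - l) * a + l * b)),
      (forall a b : R, 0 <= a -> a <= b -> psi a <= psi b),
      psi t @[t --> +oo] --> +oo,
      (exists C : R, \forall t \near 0^'+, `|psi t| <= C * t) &
      (psi t / t @[t --> +oo] --> 0)].

Definition bdd_meas (x : R -> R) : Prop :=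
  measurable_fun (`]0%R, +oo[ : set R) x /\
  exists M : R, forall s : R, 0 < s -> `|x s| <= M.

Definition distr_fun (x : R -> R) (l : R) : \bar R :=
  (@lebesgue_measure R) ([set s | 0 < s /\ l < `|x s|]).

(* nonincreasing right-continuous rearrangement of |x| *)
Definition rearr (x : R -> R) (t : R) : R :=
  inf [set l : R | 0 <= l /\ (distr_fun x l <= t%:E)%E].

Definition marc_norm (psi : R -> R) (x : R -> R) : \bar R :=
  ereal_sup [set (((psi t)^-1)%:E *
                 \int[@lebesgue_measure R]_(s in `]0%R, t]) (rearr x s)%:E)%E
            | t in (`]0%R, +oo[ : set R)].

End Defs.

(* Main.v *)
Require Import Defs.
From HB Require Import structures.
From mathcomp Require Import all_boot all_order all_algebra.
From mathcomp Require Import all_classical all_reals all_analysis.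
From mathcomp Require Import ring lra.
Import Order.TTheory GRing.Theory Num.Theory.
Import numFieldNormedType.Exports.
Local Open Scope classical_set_scope.
Local Open Scope ring_scope.

Lemma distr_set_meas (R : realType) (x : R -> R) (l : R) :
  measurable_fun (`]0%R, +oo[ : set R) x ->
  measurable [set s : R | 0 < s /\ l < `|x s|].
Proof.
move=> mx.
have mn : measurable_fun (`]0%R, +oo[ : set R) (Num.Def.normr \o x).
  exact: measurableT_comp (@measurable_realfun.normr_measurable R setT) mx.
have := mn (measurable_itv `]0%R, +oo[) _ (measurable_itv `]l, +oo[).
set A := (X in measurable X -> _).
suff -> : [set s : R | 0 < s /\ l < `|x s|] = A by [].
rewrite /A; apply/seteqP; split => s /=.
- move=> [s0 ls]; split; rewrite /= in_itv /= ?s0 ?ls //= andbT //.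
- rewrite !in_itv /= !andbT => -[s0 ls]; by split.
Qed.

Lemma distr_anti (R : realType) (x : R -> R) (l l' : R) :
  measurable_fun (`]0%R, +oo[ : set R) x -> l <= l' ->
  (distr_fun x l' <= distr_fun x l)%E.
Proof.
move=> mx ll; rewrite /distr_fun; apply: le_measure; rewrite ?inE;
  try exact: distr_set_meas.
by move=> s /= [s0 ls]; split => //; apply: le_lt_trans ls.
Qed.

Lemma distr_big (R : realType) (x : R -> R) (M : R) :
  (forall s, 0 < s -> `|x s| <= M) -> distr_fun x (Num.max M 0) = 0%E.
Proof.
move=> hM; rewrite /distr_fun.
suff -> : [set s : R | 0 < s /\ Num.max M 0 < `|x s|] = set0 by rewrite measure0.
apply/seteqP; split => s //= [s0]; rewrite comparable_gt_max ?real_comparable ?num_real //.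
by move=> /andP[] /(lt_le_trans) /(_ (hM s s0)); rewrite ltxx.
Qed.

Lemma rearr_ne (R : realType) (x : R -> R) (M s : R) :
  (forall s, 0 < s -> `|x s| <= M) -> 0 <= s ->
  [set l : R | 0 <= l /\ (distr_fun x l <= s%:E)%E] !=set0.
Proof.
move=> hM s0; exists (Num.max M 0); split; first by rewrite le_max lexx orbT.
by rewrite distr_big // lee_fin.
Qed.

Lemma rearr_ge0 (R : realType) (x : R -> R) (s : R) : 0 <= rearr x s.
Proof.
rewrite /rearr; set S := (X in inf X).
have [->|nS] := eqVneq S set0; first by rewrite inf0.
apply: lb_le_inf; first exact/set0P.
by move=> l [].
Qed.

Lemma rearr_anti (R : realType) (x : R -> R) (M s s' : R) :
  (forall s, 0 < s -> `|x s| <= M) -> 0 <= s -> s <= s' ->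
  rearr x s' <= rearr x s.
Proof.
move=> hM s0 ss; rewrite /rearr; apply: lb_le_inf; first exact: (@rearr_ne R x M s hM s0).
move=> l [l0 hl].
have hb : has_lbound [set l : R | 0 <= l /\ (distr_fun x l <= s'%:E)%E].
  by exists 0 => z [].
apply: (ge_inf hb); split => //; apply: le_trans hl _; by rewrite lee_fin.
Qed.

Lemma rearr_lb (R : realType) (x : R -> R) (M t s v : R) :
  measurable_fun (`]0%R, +oo[ : set R) x ->
  (forall s, 0 < s -> `|x s| <= M) -> 0 < t -> 0 <= s -> s <= v ->
  (v%:E < distr_fun x t^-1)%E -> t^-1 <= rearr x s.
Proof.
move=> mx hM t0 s0 sv hv; rewrite /rearr; apply: lb_le_inf; first exact: (@rearr_ne R x M s hM s0).
move=> l [l0 hl]; rewrite leNgt; apply/negP => lt.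
have := @distr_anti R x _ _ mx (ltW lt).
move=> h; have : (distr_fun x t^-1 <= v%:E)%E.
  by apply: le_trans h _; apply: le_trans hl _; rewrite lee_fin.
by rewrite leNgt hv.
Qed.

Lemma int_lb (R : realType) (x : R -> R) (M t v : R) :
  measurable_fun (`]0%R, +oo[ : set R) x ->
  (forall s, 0 < s -> `|x s| <= M) -> 0 < t -> 0 < v ->
  (v%:E < distr_fun x t^-1)%E ->
  ((t^-1 * v)%:E <= \int[@lebesgue_measure R]_(s in `]0%R, v]) (rearr x s)%:E)%E.
Proof.
move=> mx hM t0 v0 hv.
pose g := fun s => rearr x (Num.max s 0).
have -> : (\int[@lebesgue_measure R]_(s in `]0%R, v]) (rearr x s)%:E =
          \int[@lebesgue_measure R]_(s in `]0%R, v]) (g s)%:E)%E.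
  apply: eq_integral => s; rewrite inE /= in_itv /= => /andP[s0 _].
  by rewrite /g max_l // ltW.
have mg : measurable_fun (`]0%R, v] : set R) g.
  apply: measurable_realfun.nonincreasing_measurable; first exact: measurable_itv.
  move=> a b ab; rewrite /g; apply: (@rearr_anti R x M); first by [].
    by rewrite le_max lexx orbT.
  by rewrite ge_max !le_max ab lexx !orbT.
have -> : ((t^-1 * v)%:E = \int[@lebesgue_measure R]_(s in `]0%R, v]) (cst (t^-1)%:E s))%E.
  rewrite integral_cst; last exact: measurable_itv.
  have h := lebesgue_measure_itv `]0%R, v]. rewrite /= lte_fin v0 oppr0 addr0 in h.
  rewrite EFinM; congr (_ * _)%E; exact: (esym h).
apply: ge0_le_integral.
- exact: measurable_itv.
- by move=> s _; rewrite /= lee_fin invr_ge0 ltW.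
- exact: measurable_cst.
- exact/measurable_realfun.measurable_EFinP.
- move=> s; rewrite /= in_itv /= => /andP[s0 sv]; rewrite lee_fin /g max_l; last exact: ltW.
  by apply: (@rearr_lb R x M t s v) => //; apply: ltW.
Qed.

Theorem lemma2p2 (R : realType) (psi : R -> R) (x : R -> R) (c : R) :
  in_Psi psi ->
  (psi (t * psi t) / psi t @[t --> +oo] --> (1 : R)) ->
  bdd_meas x ->
  (marc_norm psi x < +oo)%E ->
  (marc_norm psi x < c%:E)%E ->
  exists T : R, forall t : R, T < t ->
    (distr_fun x (t^-1) <= (c * t * psi t)%:E)%E.
Proof.
move=> [conc mono psioo bigO smallo] lim [mx [M hM]] mfin mc.
have elt : forall t, 0 < t ->
    (((psi t)^-1)%:E * \int[@lebesgue_measure R]_(s in `]0%R, t]) (rearr x s)%:E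
      <= marc_norm psi x)%E.
  move=> t t0; apply: ereal_sup_ubound; exists t => //.
  by rewrite /= in_itv /= t0.
have [M1 [_ HM1]] := cvgry_ge psioo 1.
pose t1 := Num.max M1 0 + 1.
have hm1 : M1 <= Num.max M1 0 by rewrite le_max lexx.
have hm2 : 0 <= Num.max M1 0 by rewrite le_max lexx orbT.
have t1M : M1 < t1 by rewrite /t1; lra.
have t10 : 0 < t1 by rewrite /t1; lra.
have m0 : (0 <= marc_norm psi x)%E.
  apply: le_trans (elt t1 t10); apply: mule_ge0.
    by rewrite lee_fin invr_ge0; apply: le_trans (HM1 t1 t1M).
  by apply: integral_ge0 => s _; rewrite lee_fin rearr_ge0.
pose r := fine (marc_norm psi x).
have rE : marc_norm psi x = r%:E by rewrite /r fineK // ge0_fin_numE.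
have r0 : 0 <= r by rewrite -lee_fin -rE.
have rc : r < c by rewrite -lte_fin -rE.
have c0 : 0 < c by apply: le_lt_trans rc.
pose e := Num.min 1 ((c - r) / (3 * (r + 1))).
have e0 : 0 < e.
  rewrite /e lt_min ltr01 /= divr_gt0 // ?subr_gt0 //.
  by rewrite mulr_gt0 // ltr_wpDl.
have e1 : e <= 1 by rewrite /e ge_min lexx.
have e2 : e * (3 * (r + 1)) <= c - r.
  have h : e <= (c - r) / (3 * (r + 1)) by rewrite /e ge_min lexx orbT.
  rewrite -ler_pdivlMr //; rewrite mulr_gt0 //; lra.
have key : r * (1 + e) ^+ 2 < c by nra.
have [M2 [_ HM2]] : \forall t \near +oo,
    0 < t /\ c + c^-1 + 1 <= psi t /\ `|1 - psi (t * psi t) / psi t| < e.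
  near=> t; split; [|split]; near: t.
  - by exists 0; split => //; rewrite real0.
  - exact: cvgry_ge.
  - exact: (@cvgr_dist_lt _ _ _ _ _ _ _ lim _ e0).
exists M2 => t tM.
have [t0 [pt d1]] := HM2 t tM.
have cc : c * c^-1 = 1 by rewrite mulfV // gt_eqF.
have ci0 : 0 < c^-1 by rewrite invr_gt0.
have pt0 : 0 < psi t by lra.
have cpt : 1 <= c * psi t by nra.
pose s := t * psi t.
have st : t <= s by rewrite /s; nra.
have [_ [ps ds]] := HM2 s (lt_le_trans tM st).
have pst : psi t <= psi s by apply: mono => //; lra.
have ps0 : 0 < psi s by lra.
have a1 : psi s < (1 + e) * psi t.
  move: d1; rewrite ltr_norml => /andP[h _].
  have : psi s / psi t < 1 + e by rewrite /s; lra.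
  by rewrite ltr_pdivrMr.
have a2 : psi (s * psi s) < (1 + e) * psi s.
  move: ds; rewrite ltr_norml => /andP[h _].
  have : psi (s * psi s) / psi s < 1 + e by lra.
  by rewrite ltr_pdivrMr.
pose v := c * t * psi t.
have v0 : 0 < v by rewrite /v !mulr_gt0.
have vt : t <= v by rewrite /v; nra.
have vs : v <= s * psi s.
  have cps : c <= psi s by lra.
  have tp : 0 <= t * psi t by rewrite mulr_ge0 // ltW.
  have -> : s * psi s = psi s * (t * psi t) by rewrite /s; ring.
  have -> : v = c * (t * psi t) by rewrite /v; ring.
  nra.
have pv : psi v <= psi (s * psi s) by apply: mono => //; lra.
have pvt : psi t <= psi v by apply: mono => //; lra.
have pv0 : 0 < psi v by lra.
rewrite leNgt; apply/negP => hv.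
have I1 := @int_lb R x M t v mx hM t0 v0 hv.
have E := elt v v0.
have E2 : ((psi v)^-1 * (t^-1 * v) <= r)%R.
  rewrite -lee_fin -rE EFinM; apply: le_trans E.
  by apply: lee_wpmul2l => //; rewrite lee_fin invr_ge0 ltW.
have tv : t^-1 * v = c * psi t by rewrite /v; field; rewrite gt_eqF.
rewrite tv in E2.
have E3 : c * psi t <= r * psi v.
  have -> : c * psi t = psi v * ((psi v)^-1 * (c * psi t)) by field; rewrite gt_eqF.
  rewrite [r * _]mulrC; apply: ler_wpM2l => //; exact: ltW.
have E4 : r * psi v <= r * ((1 + e) ^+ 2 * psi t).
  apply: ler_wpM2l => //.
  have : psi (s * psi s) < (1 + e) * ((1 + e) * psi t).
    apply: lt_le_trans a2 _; apply: ler_wpM2l; lra.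
  rewrite expr2 -mulrA; lra.
have E5 : r * ((1 + e) ^+ 2 * psi t) < c * psi t.
  rewrite mulrA; by rewrite ltr_pM2r.
by move: (le_lt_trans (le_trans E3 E4) E5); rewrite ltxx.
Unshelve. all: by end_near. Qed.
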